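(* Let $\vec\Sigma$ be a finite sequence of finite connected tight labeled graphs over $\mathcal B$ and let $\alpha$ be an elementary Whitehead automorphism of $F(\mathcal B)$ with distinguished label $b$. For each edge $e$ of $\vec\Sigma$ whose label $c$ is not in $\{b,b^{-1}\}$, the path $\alpha(e)$ in $\alpha\vec\Sigma$ contains exactly one subedge labeled $c$; let $e'$ denote its image in $\mathrm{tight}(\alpha\vec\Sigma)$. Then $e\mapsto e'$ is a bijection from the edges of $\vec\Sigma$ not labeled $b^{\pm1}$ to the edges of $\mathrm{tight}(\alpha\vec\Sigma)$ not labeled $b^{\pm1}$. (More precisely, after collapsing all edges labeled $b^{\pm 1}$ in $\vec\Sigma$ and in $\mathrm{tight}(\alpha\vec\Sigma)$, the induced map between the collapsed graphs is an isomorphism.)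
   Context: $F(\mathcal B)$ is the free group on the finite set $\mathcal B$. A labeled graph assigns labels in $\mathcal B^{\pm1}$ to oriented edges, $e^{-1}$ carrying the inverse label; it is tight if distinct oriented edges with the same initial vertex have distinct labels. Folding identifies two distinct oriented edges with common initial vertex and the same label; $\mathrm{tight}(\Sigma)$ is the tight labeled graph obtained from a finite $\Sigma$ by iterated folding (it is well defined), with the quotient map $\Sigma\to\mathrm{tight}(\Sigma)$. For $\alpha\in\mathrm{Aut}(F(\mathcal B))$, $\alpha\Sigma$ is obtained by replacing each oriented edge labeled $c$ by a path spelling the reduced word $\alpha(c)$. Operations on sequences are applied componentwise. An elementary Whitehead automorphism is either an automorphism induced by a permutation $\pi$ of $\mathcal B^{\pm1}$ with $\pi(c^{-1})=\pi(c)^{-1}$, or is determined by $b\in\mathcal B^{\pm1}$ (the distinguished label) and $A\subset\mathcal B^{\pm1}\setminus\{b,b^{-1}\}$ via $\alpha(b)=b$ and $\alpha(c)=b^{\epsilon(c)}\,c\,b^{-\epsilon(c^{-1})}$ for $c\in\mathcal B^{\pm1}\setminus\{b^{\pm1}\}$, where $\epsilon(x)=1$ if $x\in A$ and $0$ otherwise. *)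

(* Defs.v *)
From mathcomp Require Import all_boot all_order.
Set Implicit Arguments. Unset Strict Implicit. Unset Printing Implicit Defensive.

(* Signed letters B^{+-1}: (c, true) is c, (c, false) is c^{-1}.             *)
Definition linv {B : Type} (x : B * bool) : B * bool := (x.1, ~~ x.2).

(* Labeled graphs (Serre convention): a finite set of vertices, a finite set *)
(* of ORIENTED edges with an origin map and an edge-reversal map einv        *)
(* (e^{-1}), and a label in B^{+-1} on every oriented edge.  The terminus of *)
Record lgraph (B : Type) := LGraph {
  vtx : finType;
  edg : finType;
  orig : edg -> vtx;
  einv : edg -> edg;
  lab : edg -> B * bool }.
Arguments LGraph {B vtx edg}.
Arguments orig {B G} : rename.
Arguments einv {B G} : rename.
Arguments lab {B G} : rename.

Definition term {B} {G : lgraph B} (e : edg G) : vtx G := orig (einv e).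

Definition wf {B} (G : lgraph B) : Prop :=
  involutive (@einv B G) /\ forall e : edg G, lab (einv e) = linv (lab e).

Definition tight {B} (G : lgraph B) : Prop :=
  forall e1 e2 : edg G, orig e1 = orig e2 -> lab e1 = lab e2 -> e1 = e2.

Definition adjacent {B} (G : lgraph B) : rel (vtx G) :=
  fun u v => [exists e : edg G, (orig e == u) && (term e == v)].

Definition badjacent {B : eqType} (b : B) (G : lgraph B) : rel (vtx G) :=
  fun u v => [exists e : edg G, [&& orig e == u, term e == v & (lab e).1 == b]].
Arguments adjacent {B} G.
Arguments badjacent {B} b G.
Definition bconn {B : eqType} (b : B) (G : lgraph B) : rel (vtx G) :=
  connect (badjacent b G).

Arguments bconn {B} b G.

Definition is_morphism {B} (G H : lgraph B)
    (fv : vtx G -> vtx H) (fe : edg G -> edg H) : Prop :=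
  (forall e, fv (orig e) = orig (fe e)) /\
  (forall e, fe (einv e) = einv (fe e)) /\
  (forall e, lab (fe e) = lab e).

Definition is_fold {B} (G H : lgraph B)
    (fv : vtx G -> vtx H) (fe : edg G -> edg H) : Prop :=
  is_morphism fv fe /\ (forall y, exists x, fv x = y) /\ (forall f, exists e, fe e = f) /\
  exists e1 e2 : edg G,
    [/\ e1 <> e2, orig e1 = orig e2, lab e1 = lab e2,
     (forall x y, fe x = fe y <->
        x = y \/ (x = e1 /\ y = e2) \/ (x = e2 /\ y = e1) \/
        (x = einv e1 /\ y = einv e2) \/ (x = einv e2 /\ y = einv e1)) &
     (forall u v, fv u = fv v <->
        [\/ u = v, (u = term e1 /\ v = term e2) | (u = term e2 /\ v = term e1)])].

Inductive folds {B} : forall G H : lgraph B,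
    (vtx G -> vtx H) -> (edg G -> edg H) -> Prop :=
  | folds_refl (G : lgraph B) : folds (fun v : vtx G => v) (fun e : edg G => e)
  | folds_step (G H K : lgraph B) (fv : vtx G -> vtx H) (fe : edg G -> edg H)
      (gv : vtx H -> vtx K) (ge : edg H -> edg K) :
      is_fold fv fe -> folds gv ge ->
      folds (fun v => gv (fv v)) (fun e => ge (fe e)).

(* Substitution graph: every oriented edge e labeled x is replaced by a path *)
(* spelling the word w x.  Oriented edges of the new graph are pairs (e, i), *)
(* i < |w (lab e)|, the i-th edge of the path of e; its inverse is the      *)
(* (|w|-1-i)-th edge of the path of e^{-1}.  Interior vertices of paths are  *)
(* indexed by (e, i), 0 < i < |w (lab e)|, with e positively labeled.        *)
(* Valid for words of length at most N.+1 (and, as usual, nonempty words;   *)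
(* w must satisfy w (x^{-1}) = (w x)^{-1}).                                  *)
Section Subst.
Variables (B : finType) (N : nat) (w : B * bool -> seq (B * bool)) (G : lgraph B).

Definition slen (e : edg G) : nat := size (w (lab e)).

Definition sedge : finType :=
  {p : edg G * 'I_N.+1 | p.2 < size (w (lab p.1))}.
Definition ivtx : finType :=
  {p : edg G * 'I_N.+1 | (lab p.1).2 && (0 < p.2 < size (w (lab p.1)))}.
Definition svtx : finType := (vtx G + ivtx)%type.

Definition spos (e : edg G) (i : nat) : svtx :=
  if i == 0 then inl (orig e)
  else if slen e <= i then inl (term e)
  else if (lab e).2 then
    match @insub _ _ ivtx (e, inord i) with Some v => inr v | None => inl (orig e) end
  else
    match @insub _ _ ivtx (einv e, inord (slen e - i)) with
    | Some v => inr v | None => inl (orig e) end.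

Definition sorig (s : sedge) : svtx := spos (val s).1 (val s).2.
Definition sinv (s : sedge) : sedge :=
  odflt s (@insub _ _ sedge (einv (val s).1, inord (slen (val s).1 - (val s).2).-1)).
Definition slab (s : sedge) : B * bool :=
  nth (lab (val s).1) (w (lab (val s).1)) (val s).2.

Definition subst_graph : lgraph B := LGraph sorig sinv slab.

Definition sbase (s : edg subst_graph) : edg G := (val (s : sedge)).1.
Definition sbase_vtx (v : vtx G) : vtx subst_graph := (inl v : svtx).

End Subst.

(* Elementary Whitehead automorphism of the second kind, determined by the  *)
(* distinguished letter b and A \subset B^{+-1} \ {b, b^{-1}}:               *)
(*   alpha(b^{+-1}) = b^{+-1},  alpha(c) = b^{eps(c)} c b^{-eps(c^{-1})}.     *)
(* wh_word b A c is the reduced word alpha(c).                               *)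
Definition wh_word {B : finType} (b : B) (A : {set B * bool}) (x : B * bool)
  : seq (B * bool) :=
  if x.1 == b then [:: x]
  else (if x \in A then [:: (b, true)] else [::]) ++
       x :: (if linv x \in A then [:: (b, false)] else [::]).

(* alpha Sigma for this Whitehead automorphism (all words have length <= 3) *)
Definition wh_graph {B : finType} (b : B) (A : {set B * bool}) (G : lgraph B)
  : lgraph B := subst_graph 2 (wh_word b A) G.

(* Main.v *)
Require Import Defs.
From mathcomp Require Import all_boot all_order.
From mathcomp Require Import zify.
Set Implicit Arguments. Unset Strict Implicit. Unset Printing Implicit Defensive.

Lemma folds_props {B} (G H : lgraph B) qv qe : @folds B G H qv qe ->
  is_morphism qv qe /\ (forall y, exists x, qv x = y) /\ (forall f, exists e, qe e = f).
Proof.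
elim=> {G H qv qe} [G|G H K fv fe gv ge [[Mo [Mi Ml]] [Sv [Se _]]] _ [[Mo' [Mi' Ml']] [Sv' Se']]].
  by split; [split; [|split] | split] => // y; exists y.
split; [split; [|split]|split].
- by move=> e /=; rewrite Mo Mo'.
- by move=> e /=; rewrite Mi Mi'.
- by move=> e /=; rewrite Ml' Ml.
- move=> y; have [x <-] := Sv' y; have [z <-] := Sv x; by exists z.
- move=> y; have [x <-] := Se' y; have [z <-] := Se x; by exists z.
Qed.

Lemma folds_factor {B} (G H : lgraph B) qv qe : @folds B G H qv qe ->
  forall (T : lgraph B) (pv : vtx G -> vtx T) (pe : edg G -> edg T),
  tight T -> is_morphism pv pe ->
  exists (rv : vtx H -> vtx T) (re : edg H -> edg T),
    is_morphism rv re /\ (forall x, rv (qv x) = pv x) /\ (forall e, re (qe e) = pe e).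
Proof.
elim=> {G H qv qe} [G|G H K fv fe gv ge [[Mo [Mi Ml]] [Sv [Se Fd]]] _ IH] T pv pe tT [Po [Pi Pl]].
  by exists pv, pe; split => //; split.
have Sv' : forall y, exists x, fv x == y by move=> y; have [x <-] := Sv y; exists x.
have Se' : forall y, exists x, fe x == y by move=> y; have [x <-] := Se y; exists x.
pose rv := fun y => pv (xchoose (Sv' y)).
pose re := fun y => pe (xchoose (Se' y)).
have [e1 [e2 [ne12 o12 l12 Fe Fv]]] := Fd.
have pe12 : pe e1 = pe e2.
  by apply: tT; rewrite ?Pl // -Po o12 Po.
have Wde : forall x y, fe x = fe y -> pe x = pe y.
  move=> x y /Fe [->//|[[->->]|[[->->]|[[->->]|[->->]]]]] //; by rewrite !Pi pe12.
have Wdv : forall x y, fv x = fv y -> pv x = pv y.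
  by move=> x y /Fv [->//|[->->]|[->->]]; rewrite /term !Po !Pi pe12.
have rvE : forall x, rv (fv x) = pv x by move=> x; apply: Wdv; apply/eqP; exact: (xchooseP (Sv' (fv x))).
have reE : forall x, re (fe x) = pe x by move=> x; apply: Wde; apply/eqP; exact: (xchooseP (Se' (fe x))).
have Mr : is_morphism rv re.
  split; [|split].
  - move=> y; have [x <-] := Se y; by rewrite -Mo rvE reE Po.
  - move=> y; have [x <-] := Se y; by rewrite -Mi !reE Pi.
  - move=> y; have [x <-] := Se y; by rewrite reE Pl Ml.
have [sv [se [Ms [Hv He]]]] := IH T rv re tT Mr.
exists sv, se; split => //; split => x /=; by rewrite ?Hv ?He ?rvE ?reE.
Qed.

Lemma connect_map (T1 T2 : finType) (e1 : rel T1) (e2 : rel T2) (h : T1 -> T2) :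
  (forall x y, e1 x y -> connect e2 (h x) (h y)) ->
  forall x y, connect e1 x y -> connect e2 (h x) (h y).
Proof.
move=> He x y /connectP [p Hp ->]; elim: p x Hp => [|z p IH] x /=; first by rewrite connect0.
by case/andP => Hxz Hp; apply: connect_trans (He _ _ Hxz) (IH _ Hp).
Qed.

Lemma morph_bconn {B : eqType} (b : B) (G H : lgraph B) fv fe : @is_morphism B G H fv fe ->
  forall x y, bconn b G x y -> bconn b H (fv x) (fv y).
Proof.
move=> [Mo [Mi Ml]]; apply: connect_map => x y /existsP [e /and3P [/eqP Ho /eqP Ht Hl]].
apply: connect1; apply/existsP; exists (fe e).
rewrite -Mo Ho /term -Mi -Mo; rewrite -/(term e) Ht Ml Hl !eqxx //.
Qed.
Section W.
Variables (B : finType) (S : lgraph B) (b : B) (A : {set B * bool}).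
Hypotheses (wfS : wf S) (tS : tight S) (hA : forall x, x \in A -> x.1 != b).

Implicit Types (e : edg S).
Local Notation w := (wh_word b A).
Local Notation G := (wh_graph b A S).
Local Notation sl := (slen w (G:=S)).

Lemma linv1 (x : B * bool) : (linv x).1 = x.1. Proof. by []. Qed.
Lemma linvK (x : B * bool) : linv (linv x) = x. Proof. by case: x => ? []. Qed.

Lemma einvK : involutive (@einv B S). Proof. by case: wfS. Qed.
Lemma labinv e : lab (einv e) = linv (lab e). Proof. by case: wfS. Qed.

Definition pA (e : edg S) : nat := (lab e \in A).
Definition qA (e : edg S) : nat := (linv (lab e) \in A).

Lemma slenE e : sl e = if (lab e).1 == b then 1 else (pA e + qA e).+1.
Proof.
rewrite /slen /wh_word /pA /qA; case: eqP => // _.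
by case: (lab e \in A); case: (linv (lab e) \in A).
Qed.

Lemma notA_b e : (lab e).1 == b -> pA e = 0 /\ qA e = 0.
Proof.
move=> /eqP Hb; rewrite /pA /qA.
case: (boolP (lab e \in A)) => [/hA|]; first by rewrite Hb eqxx.
case: (boolP (linv (lab e) \in A)) => [/hA|]; first by rewrite linv1 Hb eqxx.
by [].
Qed.

Lemma pA_lt e : pA e < sl e.
Proof. rewrite slenE; case: ifP => [/notA_b [->]|] //; lia. Qed.
Lemma sl_le3 e : sl e <= 3.
Proof. rewrite slenE; case: ifP => // _; rewrite /pA /qA; by case: (lab e \in A); case: (linv (lab e) \in A). Qed.
Lemma sl_gt0 e : 0 < sl e.
Proof. by rewrite slenE; case: ifP. Qed.
Lemma sl_inv e : sl (einv e) = sl e.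
Proof. by rewrite /slen labinv /wh_word !linv1 linvK; case: ifP => //; case: (_ \in A); case: (_ \in A). Qed.
Lemma sizew_inv x : size (w (linv x)) = size (w x).
Proof. by rewrite /wh_word !linv1 linvK; case: ifP => //; case: (_ \in A); case: (_ \in A). Qed.

Lemma pA_inv e : pA (einv e) = qA e.
Proof. by rewrite /pA /qA labinv. Qed.
Lemma qA_inv e : qA (einv e) = pA e.
Proof. by rewrite /pA /qA labinv linvK. Qed.

Lemma slab1 e i : i < sl e ->
  ((nth (lab e) (w (lab e)) i).1 == b) = ((lab e).1 == b) || (i != pA e).
Proof.
rewrite /slen /wh_word /pA; case: eqP => [Hb|Hb].
  by case: i => //= _; rewrite Hb eqxx.
case: (boolP (lab e \in A)) => HA; case: (boolP (linv (lab e) \in A)) => HB;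
  case: i => [|[|[|i]]] //=; rewrite ?eqxx //; move/eqP: Hb => /negPf -> //.
Qed.

Lemma slabp e : nth (lab e) (w (lab e)) (pA e) = lab e.
Proof.
case: (boolP ((lab e).1 == b)) => Hb.
  by have [-> _] := notA_b Hb; rewrite /wh_word Hb.
by rewrite /wh_word (negPf Hb) /pA; case: (lab e \in A).
Qed.


Lemma spos_inv e i : i <= sl e -> spos 2 w (einv e) (sl e - i) = spos 2 w e i.
Proof.
move=> Hi; have H0 := sl_gt0 e; have Hinv := sl_inv e.
rewrite /spos -/(sl e) -/(sl (einv e)) Hinv.
case: (posnP i) => [Ei|Hi0].
  rewrite Ei; have -> : sl e - 0 = sl e by lia.
  rewrite leqnn; have -> : (sl e == 0) = false by lia.
  by rewrite /term einvK.
case: (boolP (sl e <= i)) => Hle.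
  have Ei : i = sl e by apply/eqP; rewrite eqn_leq Hi Hle.
  rewrite Ei; have -> : sl e - sl e = 0 by lia.
  by rewrite eqxx.
have -> : (sl e - i == 0) = false by apply/negbTE; lia.
have -> : (sl e <= sl e - i) = false by apply/negbTE; lia.
rewrite labinv /= einvK (subKn Hi).
have Hlt : i < sl e by rewrite ltnNge.
have H3 := sl_le3 e.
case: (boolP (lab e).2) => Hs /=.
  case: insubP => [u _ _|] //=; rewrite Hs inordK -/(sl e); last by lia.
  by rewrite Hi0 Hlt.
case: insubP => [u _ _|] //=.
rewrite inordK; last by lia.
rewrite -/(sl (einv e)) Hinv labinv /= Hs.
have -> : 0 < sl e - i by lia.
by rewrite /= ltn_subrL Hi0 H0.
Qed.

Lemma spos_ivtx (v : ivtx 2 w S) : spos 2 w (val v).1 (val v).2 = inr v.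
Proof.
case: v => [[e i] /= Hv]; have /andP [He /andP [Hi0 Hi]] := Hv.
rewrite /spos -/(sl e) He.
have -> : (i == 0 :> nat) = false by apply/negbTE; lia.
have -> : (sl e <= i) = false by apply/negbTE; rewrite -ltnNge.
case: insubP => [u Pu Eu|]; last by rewrite /= inord_val He Hi0 Hi.
by congr inr; apply: val_inj; rewrite Eu /= inord_val.
Qed.

Lemma sinv_val (s : sedge 2 w S) :
  val (sinv s) = (einv (val s).1, inord (sl (val s).1 - (val s).2).-1).
Proof.
rewrite /sinv; case: insubP => [u _ -> //|]; case: s => [[e i] /= Hi].
have H3 := sl_le3 e.
rewrite inordK; last by lia.
rewrite -/(sl (einv e)) sl_inv; rewrite -/(sl e) in Hi; move=> H; exfalso; move: H; apply/negP/negPn; lia.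
Qed.

Lemma sterm (s : edg G) : term s = spos 2 w (val (s : sedge 2 w S)).1 (val (s : sedge 2 w S)).2.+1.
Proof.
rewrite /term /= /sorig sinv_val /=.
case: s => [[e i] /= Hi]; have H3 := sl_le3 e.
rewrite inordK; last by lia.
by rewrite -subnS spos_inv.
Qed.


Definition bnext (u : vtx S) : option (edg S) :=
  [pick g | (orig g == u) && (lab g == (b, true))].
Definition Tv : finType := (vtx S + vtx S)%type.
Definition Te : finType := (edg S + (vtx S * bool))%type.
Definition shv (u : vtx S) : Tv := if bnext u is Some g then inl (term g) else inr u.
Definition Torig (x : Te) : Tv :=
  match x with
  | inl e => if lab e \in A then shv (orig e) else inl (orig e)
  | inr (u, s) => if bnext u is Some _ then inr u else if s then inl u else inr u
  end.
Definition Teinv (x : Te) : Te :=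
  match x with inl e => inl (einv e) | inr (u, s) => inr (u, ~~ s) end.
Definition Tlab (x : Te) : B * bool :=
  match x with inl e => lab e | inr (_, s) => (b, s) end.
Definition T : lgraph B := LGraph Torig Teinv Tlab.
Definition bout u : Te := if bnext u is Some g then inl g else inr (u, true).
Definition pos_img e (i : nat) : Tv :=
  if i == 0 then inl (orig e) else if sl e <= i then inl (term e)
  else if (i == 1) && (lab e \in A) then shv (orig e) else shv (term e).
Definition edge_img e (i : nat) : Te :=
  if i == pA e then inl e else if i < pA e then bout (orig e) else Teinv (bout (term e)).
Definition phv (x : svtx 2 w S) : Tv :=
  match x with inl v => inl v | inr v => pos_img (val v).1 (val v).2 end.
Definition phe (s : sedge 2 w S) : Te := edge_img (val s).1 (val s).2.

Lemma bnextP u :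
  (exists g, bnext u = Some g /\ orig g = u /\ lab g = (b, true)) \/
  (bnext u = None /\ forall g, orig g = u -> lab g <> (b, true)).
Proof.
rewrite /bnext; case: pickP => [g /andP [/eqP H1 /eqP H2]|H].
  by left; exists g.
by right; split => // g Hg Hl; move: (H g); rewrite Hg Hl !eqxx.
Qed.

Lemma shv_inj : injective shv.
Proof.
move=> u1 u2; rewrite /shv.
have [[g1 [-> [<- L1]]]|[-> _]] := bnextP u1;
have [[g2 [-> [<- L2]]]|[-> _]] := bnextP u2 => //; last by case.
case=> Ht; suff /(canRL einvK) -> : einv g1 = einv g2 by rewrite einvK.
by apply: tS; rewrite ?labinv ?L1 ?L2 //; rewrite -/(term g1) Ht.
Qed.

Lemma TeinvK : involutive Teinv.
Proof. by case=> [e|[u s]] /=; rewrite ?einvK ?negbK. Qed.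

Definition proj (x : Tv) : vtx S := match x with inl u => u | inr u => u end.

Lemma T_tight : tight T.
Proof.
have Hr : forall u s, proj (Torig (inr (u, s))) = u.
  by move=> u s /=; case: (bnext u) => [?|] //; case: s.
case=> [e1|[u1 s1]] [e2|[u2 s2]] /=.
- move=> Ho Hl; rewrite -Hl in Ho; apply: f_equal; apply: tS => //.
  by case: (lab e1 \in A) Ho => [/shv_inj|[]].
- move=> Ho Hl; have Hb : (lab e1).1 == b by rewrite Hl.
  have [HA _] := notA_b Hb.
  have HA' : (lab e1 \in A) = false by move: HA; rewrite /pA; case: (_ \in A).
  rewrite HA' in Ho; move: Ho.
  have [[g [-> _]]|[-> Hn]] := bnextP u2 => //.
  by case: s2 Hl => // Hl [Ho]; case: (Hn e1 Ho).
- move=> Ho Hl; have Hb : (lab e2).1 == b by rewrite -Hl.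
  have [HA _] := notA_b Hb.
  have HA' : (lab e2 \in A) = false by move: HA; rewrite /pA; case: (_ \in A).
  rewrite HA' in Ho; move: Ho.
  have [[g [-> _]]|[-> Hn]] := bnextP u1 => //.
  by case: s1 Hl => // Hl [Ho]; case: (Hn e2 (esym Ho)).
- move=> Ho [Hs]; have := f_equal proj Ho; rewrite !Hr => ->; by rewrite Hs.
Qed.


Lemma b_notA : (b, true) \notin A /\ (b, false) \notin A.
Proof. by split; apply/negP => /hA /=; rewrite eqxx. Qed.

Lemma bout_orig u : Torig (bout u) = inl u.
Proof.
rewrite /bout; have [[g [E [Ho Hl]]]|[E _]] := bnextP u; rewrite E /= ?E //.
by have [H1 _] := b_notA; rewrite Hl (negPf H1) Ho.
Qed.

Lemma bin_orig u : Torig (Teinv (bout u)) = shv u.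
Proof.
rewrite /bout /shv; have [[g [E [Ho Hl]]]|[E _]] := bnextP u; rewrite E /= ?E //.
by have [_ H2] := b_notA; rewrite labinv Hl (negPf H2).
Qed.

Lemma bout_lab u : Tlab (bout u) = (b, true).
Proof. by rewrite /bout; have [[g [-> [Ho Hl]]]|[-> _]] := bnextP u. Qed.

Lemma bin_lab u : Tlab (Teinv (bout u)) = (b, false).
Proof. by rewrite /bout; have [[g [-> [Ho Hl]]]|[-> _]] := bnextP u => //=; rewrite labinv Hl. Qed.

Lemma termK e : term (einv e) = orig e.
Proof. by rewrite /term einvK. Qed.

Lemma pos_img_inv e i : i <= sl e -> pos_img (einv e) (sl e - i) = pos_img e i.
Proof.
move=> Hi; rewrite /pos_img sl_inv termK -/(term e) labinv.
have H0 := sl_gt0 e; have H3 := sl_le3 e.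
case: (posnP i) => [->|Hi0].
  rewrite subn0 leqnn; have -> : (sl e == 0) = false by lia. done.
case: (boolP (sl e <= i)) => Hle.
  have -> : i = sl e by apply/eqP; rewrite eqn_leq Hi Hle.
  by rewrite subnn eqxx.
have E1 : (sl e - i == 0) = false by lia.
have E2 : (i == 0) = false by lia.
have E3 : (sl e <= sl e - i) = false by lia.
rewrite ?E1 ?E2 ?E3 ?(negPf Hle).
clear E1 E2 E3; move: Hle Hi0 Hi; rewrite slenE /pA /qA.
case: eqP => _; first by lia.
case: (lab e \in A); case: (linv (lab e) \in A) => /=;
  case: i => [|[|[|i]]] //=.
Qed.

Lemma phv_spos e i : i <= sl e -> phv (spos 2 w e i) = pos_img e i.
Proof.
move=> Hi; rewrite /spos -/(sl e).
case: (posnP i) => [->|Hi0] //=.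
case: (boolP (sl e <= i)) => Hle.
  by rewrite /pos_img Hle; have -> : (i == 0) = false by lia.
idtac.
have H3 := sl_le3 e; have Hlt : i < sl e by rewrite ltnNge.
case: (boolP (lab e).2) => Hs.
  case: insubP => [u _ Eu|]; last by rewrite /= Hs inordK -/(sl e) ?Hi0 ?Hlt //; lia.
  by rewrite /= Eu /= inordK //; lia.
case: insubP => [u _ Eu|]; last first.
  rewrite /= labinv /= Hs inordK; last by lia.
  rewrite sizew_inv -/(sl e).
  by move/negP; case; apply/andP; split; lia.
rewrite /= Eu /= inordK; last by lia.
by rewrite pos_img_inv // ltnW.
Qed.


Lemma notA_b' e : (lab e).1 == b -> (lab e \in A) = false /\ (linv (lab e) \in A) = false.
Proof. move=> Hb; have [] := notA_b Hb; rewrite /pA /qA; by case: (lab e \in A); case: (linv (lab e) \in A). Qed.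

Lemma edge_orig e i : i < sl e -> Torig (edge_img e i) = pos_img e i.
Proof.
rewrite /edge_img /pos_img slenE; case: (boolP ((lab e).1 == b)) => Hb.
  have [HA _] := notA_b' Hb; case: i => //= _.
  by rewrite /pA HA /= HA.
case: i => [|[|[|i]]] /=; rewrite /pA /qA /=;
  case HA: (lab e \in A); case HB: (linv (lab e) \in A) => //= _;
  by rewrite ?HA ?bout_orig ?bin_orig.
Qed.

Lemma edge_lab e i : i < sl e -> Tlab (edge_img e i) = nth (lab e) (w (lab e)) i.
Proof.
rewrite /edge_img slenE /wh_word; case: (boolP ((lab e).1 == b)) => Hb.
  have [HA _] := notA_b' Hb; case: i => //= _.
  by rewrite /pA HA.
idtac.
case: i => [|[|[|i]]] /=; rewrite /pA /qA /=;
  case: (lab e \in A); case: (linv (lab e) \in A) => //= _;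
  by rewrite ?bout_lab ?bin_lab.
Qed.

Lemma edge_inv e i : i < sl e -> Teinv (edge_img e i) = edge_img (einv e) (sl e - i).-1.
Proof.
rewrite /edge_img pA_inv termK slenE; case: (boolP ((lab e).1 == b)) => Hb.
  have [HA HB] := notA_b' Hb; case: i => //= _.
  by rewrite /pA /qA HA HB.
case: i => [|[|[|i]]] /=; rewrite /pA /qA /=;
  case: (lab e \in A); case: (linv (lab e) \in A) => //= _;
  by rewrite ?TeinvK.
Qed.

Lemma phi_morph : is_morphism (G:=G) (H:=T) phv phe.
Proof.
split; [|split].
- move=> s; case: s => [[e i] /= Hi].
  rewrite /= /sorig /= /phe /= phv_spos; last exact: ltnW.
  by rewrite edge_orig.
- move=> s; rewrite /= /phe sinv_val /=.
  case: s => [[e i] /= Hi]; have H3 := sl_le3 e.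
  by rewrite inordK ?edge_inv //; lia.
- move=> s; case: s => [[e i] /= Hi].
  by rewrite /phe /= edge_lab.
Qed.


Lemma mk_ok e i : i < sl e -> ((e, inord i) : edg S * 'I_3).2 < size (w (lab (e, inord i : 'I_3).1)).
Proof. move=> Hi; have H3 := sl_le3 e; rewrite /= inordK -/(sl e) //; lia. Qed.

Definition mk e i (Hi : i < sl e) : edg G := exist _ (e, inord i) (mk_ok Hi).

Lemma badj_G e i : i < sl e -> ((lab e).1 == b) || (i != pA e) ->
  badjacent b G (spos 2 w e i) (spos 2 w e i.+1).
Proof.
move=> Hi Hc; have H3 := sl_le3 e; apply/existsP; exists (mk Hi).
rewrite sterm /= /sorig /slab /= !inordK; last by lia.
by rewrite !eqxx slab1.
Qed.

Lemma sposS e : spos 2 w e (sl e) = inl (term e).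
Proof. rewrite /spos -/(sl e) leqnn; have -> : (sl e == 0) = false by have := sl_gt0 e; lia. done. Qed.

Lemma lift_bconn u v : bconn b S u v -> bconn b G (inl u) (inl v).
Proof.
apply: (connect_map (h := fun u => (inl u : svtx 2 w S))) => x y /existsP [e /and3P [/eqP Ho /eqP Ht Hl]].
apply: connect1; have Hs := slenE e; rewrite Hl in Hs.
have := @badj_G e 0; rewrite Hs Hl => /(_ isT isT).
have E1 : spos 2 w e 1 = inl (term e) by have := sposS e; rewrite Hs.
have E0 : spos 2 w e 0 = inl (orig e) by [].
by rewrite E0 E1 Ho Ht.
Qed.

Lemma T_bconn x y : bconn b T x y -> bconn b S (proj x) (proj y).
Proof.
apply: connect_map => {}x {}y /existsP [t /and3P [/eqP Ho /eqP Ht Hl]].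
case: t Ho Ht Hl => [e|[u s]] /= <- <-.
  move=> Hl; have [HA HB] := notA_b' Hl; rewrite /term /= HA labinv HB /=.
  by apply: connect1; apply/existsP; exists e; rewrite !eqxx Hl.
move=> _; have Hr : forall s, proj (Torig (inr (u, s))) = u.
  by move=> s' /=; case: (bnext u) => [?|] //; case: s'.
by rewrite /term Hr /= Hr connect0.
Qed.


Definition sp e : edg G := mk (pA_lt e).

Lemma pA_le1 e : pA e <= 1. Proof. by rewrite /pA; case: (_ \in A). Qed.
Lemma qA_le1 e : qA e <= 1. Proof. by rewrite /qA; case: (_ \in A). Qed.

Lemma sp_lab e : lab (sp e) = lab e.
Proof.
have := pA_le1 e => H1.
by rewrite /= /slab /= inordK ?slabp //; lia.
Qed.

Lemma phe_sp e : phe (sp e) = inl e.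
Proof.
have := pA_le1 e => H1.
by rewrite /phe /= inordK /edge_img ?eqxx //; lia.
Qed.

Lemma sp_base e : sbase (sp e) = e. Proof. by []. Qed.

Lemma sp_uniq (s : edg G) : (lab s).1 != b -> (lab (sbase s)).1 != b /\ s = sp (sbase s).
Proof.
case: s => [[e i] /= Hi]; rewrite /slab /= slab1 // negb_or negbK => /andP [Hb /eqP Hp].
split => //; apply: val_inj; rewrite /= /sbase /=; congr pair; apply: val_inj.
have := pA_le1 e => H1.
by rewrite /= inordK -Hp //; lia.
Qed.

Lemma sinv_sp e : (lab e).1 != b -> sinv (sp e) = sp (einv e).
Proof.
move=> Hb; apply: val_inj; rewrite sinv_val /=; congr pair; apply: val_inj.
have := pA_le1 e; have := qA_le1 e; have := slenE e; rewrite (negPf Hb) => Hs H1 H2.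
rewrite /= pA_inv !inordK; lia.
Qed.

Lemma orig_sp e : (lab e).1 != b -> bconn b G (spos 2 w e (pA e)) (inl (orig e)).
Proof.
move=> Hb; have := pA_le1 e; have := qA_le1 e; have := slenE e; rewrite (negPf Hb) => Hs H1 H2.
case: (posnP (pA e)) => [->|Hp]; first exact: connect0.
have Hp1 : pA e = 1 by lia.
apply: connect1; rewrite Hp1.
have := @badj_G (einv e) (sl e - 1).
rewrite sl_inv pA_inv labinv linv1 (negPf Hb) /=.
have -> : (sl e - 1 != qA e) by lia.
move=> /(_ _ isT); rewrite spos_inv; last by lia.
have -> : (sl e - 1).+1 = sl e - 0 by lia.
rewrite spos_inv //; apply; lia.
Qed.

Lemma interior (x : svtx 2 w S) : exists u, bconn b G (inl u) x.
Proof.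
case: x => [u|v]; first by exists u; exact: connect0.
rewrite -spos_ivtx.
case: v => [[e i] /= Hv]; have /andP [He /andP [Hi0 Hi]] := Hv.
rewrite -/(sl e) in Hi.
have := pA_le1 e; have := qA_le1 e; have := slenE e.
case: (boolP ((lab e).1 == b)) => Hb Hs H1 H2; first by lia.
case: (boolP ((i == 1 :> nat) && (pA e == 1))) => Hc.
  exists (orig e); apply: connect1.
  have := @badj_G e 0; rewrite (negPf Hb) /=.
  have -> : (0 != pA e) by lia.
  have -> : (i : nat) = 1 by lia.
  by apply; lia.
exists (orig (einv e)); apply: connect1.
have := @badj_G (einv e) 0; rewrite sl_inv pA_inv labinv linv1 (negPf Hb) /=.
have -> : (0 != qA e) by lia.
have E : spos 2 w (einv e) 1 = spos 2 w e i.
  have := @spos_inv e i (ltnW Hi); have -> : sl e - i = 1 by lia. done.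
rewrite E; apply; lia.
Qed.


Lemma part1 : forall e : edg S, (lab e).1 != b ->
     exists! s : edg G, sbase s = e /\ lab s = lab e.
Proof.
  move=> e Hb; exists (sp e); split; first by split; [done | exact: sp_lab].
  move=> s [Hs Hl]; have Hb' : (lab s).1 != b by rewrite Hl.
  by have [_ ->] := sp_uniq Hb'; rewrite Hs.
Qed.

Lemma part2 : forall (H : lgraph B) (qv : vtx G -> vtx H)
          (qe : edg G -> edg H),
     folds qv qe -> tight H ->
     exists f : edg S -> edg H,
       (forall e, (lab e).1 != b ->
          exists s : edg G,
            [/\ sbase s = e, lab s = lab e & f e = qe s]) /\
       {in [pred e | (lab e).1 != b] &, injective f} /\
       (forall e, (lab e).1 != b -> (lab (f e)).1 != b) /\
       (forall e' : edg H, (lab e').1 != b -> exists e, (lab e).1 != b /\ f e = e') /\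
       (forall u v, bconn b S u v ->
          bconn b H (qv (sbase_vtx _ _ u)) (qv (sbase_vtx _ _ v))) /\
       (forall u v, bconn b H (qv (sbase_vtx _ _ u)) (qv (sbase_vtx _ _ v)) ->
          bconn b S u v) /\
       (forall y : vtx H, exists u, bconn b H (qv (sbase_vtx _ _ u)) y) /\
       (forall e, (lab e).1 != b ->
          bconn b H (orig (f e)) (qv (sbase_vtx _ _ (orig e))) /\
          f (einv e) = einv (f e)).
Proof.
move=> H qv qe Hf tH.
have [[Mo [Mi Ml]] [Sv Se]] := folds_props Hf.
have Mq : is_morphism qv qe by split; [|split].
have [rv [re [Mr [Rv Re]]]] := folds_factor Hf T_tight phi_morph.
exists (fun e => qe (sp e)).
split.
  by move=> e Hb; exists (sp e); split => //; exact: sp_lab.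
split.
  move=> e1 e2 _ _ E; have := f_equal re E; rewrite !Re !phe_sp; by case.
split.
  by move=> e Hb; rewrite Ml sp_lab.
split.
  move=> e' Hb; have [s Es] := Se e'; rewrite -Es Ml in Hb.
  have [Hb' E] := sp_uniq Hb; exists (sbase s); split => //; by rewrite -E Es.
split.
  by move=> u v /lift_bconn /(morph_bconn Mq).
split.
  by move=> u v /(morph_bconn Mr); rewrite !Rv /= => /T_bconn.
split.
  move=> y; have [x <-] := Sv y; have [u Hu] := interior x.
  by exists u; exact: morph_bconn Hu.
move=> e Hb; split.
  rewrite -Mo.
  have -> : orig (sp e) = spos 2 (wh_word b A) e (pA e).
    have := pA_le1 e => H1.
    by rewrite /= /sorig /= inordK //; lia.
  by apply: (morph_bconn Mq); apply: orig_sp.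
by rewrite -Mi /= sinv_sp.
Qed.

End W.

Theorem lemma9p7 (B : finType) (Sigma : lgraph B) (n : nat)
    (comp : vtx Sigma -> 'I_n) (b : B) (A : {set B * bool}) :
  wf Sigma -> tight Sigma ->
  (forall e : edg Sigma, comp (orig e) = comp (term e)) ->
  (forall i : 'I_n, exists v, comp v = i) ->
  (forall u v, comp u = comp v -> connect (adjacent Sigma) u v) ->
  (forall x, x \in A -> x.1 != b) ->
  (forall e : edg Sigma, (lab e).1 != b ->
     exists! s : edg (wh_graph b A Sigma), sbase s = e /\ lab s = lab e) /\
  (forall (H : lgraph B) (qv : vtx (wh_graph b A Sigma) -> vtx H)
          (qe : edg (wh_graph b A Sigma) -> edg H),
     folds qv qe -> tight H ->
     exists f : edg Sigma -> edg H,
       (forall e, (lab e).1 != b ->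
          exists s : edg (wh_graph b A Sigma),
            [/\ sbase s = e, lab s = lab e & f e = qe s]) /\
       {in [pred e | (lab e).1 != b] &, injective f} /\
       (forall e, (lab e).1 != b -> (lab (f e)).1 != b) /\
       (forall e', (lab e').1 != b -> exists e, (lab e).1 != b /\ f e = e') /\
       (forall u v, bconn b Sigma u v ->
          bconn b H (qv (sbase_vtx _ _ u)) (qv (sbase_vtx _ _ v))) /\
       (forall u v, bconn b H (qv (sbase_vtx _ _ u)) (qv (sbase_vtx _ _ v)) ->
          bconn b Sigma u v) /\
       (forall y : vtx H, exists u, bconn b H (qv (sbase_vtx _ _ u)) y) /\
       (forall e, (lab e).1 != b ->
          bconn b H (orig (f e)) (qv (sbase_vtx _ _ (orig e))) /\
          f (einv e) = einv (f e))).
Proof.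
move=> wfS tS _ _ _ hA; split; [exact: part1 | exact: part2].
Qed.
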